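(* Let $A$ be a circular $m\times n$ matrix and $b\in\mathbb{Z}_+^m$. Then $$Q^*(A,b)=\operatorname{conv}\Big(\bigcup_{\beta\in\mathbb{Z}_{\ge0}}Q_\beta(A,b)\Big),$$ where $Q_\beta(A,b)=\{x\in\mathbb{R}^n:Ax\ge b,\ x\ge0,\ \mathbf{1}^Tx=\beta\}$.
   Context: Notation: $[n]=\{1,\dots,n\}$ with addition mod $n$; for $a,c\in[n]$ with $t\ge0$ minimal such that $a+t\equiv c\pmod n$, $[a,c)_n=\{a,\dots,a+t-1\}$ (mod $n$). An $m\times n$ $\{0,1\}$-matrix $A$ is circular if for each row $i$ there are $\ell_i\in[n]$ and an integer $2\le k_i\le n-1$ such that row $i$ is the incidence vector of $[\ell_i,\ell_i+k_i)_n$. $Q(A,b)=\{x\in\mathbb{R}^n:Ax\ge b,x\ge0\}$, $Q^*(A,b)=\operatorname{conv}(Q(A,b)\cap\mathbb{Z}^n)$. *)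

(* Defs.v *)
From HB Require Import structures.
From mathcomp Require Import all_boot all_order all_algebra.
From mathcomp Require Import reals.
Set Implicit Arguments. Unset Strict Implicit. Unset Printing Implicit Defensive.
Import Order.TTheory GRing.Theory Num.Theory.
Local Open Scope ring_scope.

(* Indices [n] = {1..n} are represented by 'I_n = {0..n-1} (shift by one).
   j lies in the circular interval [l, l+k)_n iff (j - l) mod n < k. *)
Definition in_circ_interval (n : nat) (l k : nat) (j : 'I_n) : bool :=
  ((j + n - l) %% n < k)%N.

Definition circular (R : realType) (m n : nat) (A : 'M[R]_(m, n)) : Prop :=
  forall i : 'I_m, exists (l : 'I_n) (k : nat),
    (2 <= k)%N /\ (k <= n.-1)%N /\
    forall j : 'I_n, A i j = (if @in_circ_interval n l k j then 1 else 0).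

Definition Q (R : realType) (m n : nat) (A : 'M[R]_(m, n)) (b : 'I_m -> nat)
  (x : 'I_n -> R) : Prop :=
  (forall i : 'I_m, (b i)%:R <= \sum_(j < n) A i j * x j) /\
  (forall j : 'I_n, 0 <= x j).

Definition is_integral (R : realType) (n : nat) (x : 'I_n -> R) : Prop :=
  exists z : 'I_n -> int, forall j, x j = (z j)%:~R.

Definition conv (R : realType) (n : nat) (S : ('I_n -> R) -> Prop)
  (x : 'I_n -> R) : Prop :=
  exists (k : nat) (lam : 'I_k -> R) (p : 'I_k -> 'I_n -> R),
    (forall t, 0 <= lam t) /\ \sum_(t < k) lam t = 1 /\
    (forall t, S (p t)) /\
    (forall j, x j = \sum_(t < k) lam t * p t j).

Definition Qstar (R : realType) (m n : nat) (A : 'M[R]_(m, n)) (b : 'I_m -> nat) :=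
  conv (fun x => Q A b x /\ is_integral x).

Definition Qbeta (R : realType) (m n : nat) (A : 'M[R]_(m, n)) (b : 'I_m -> nat)
  (beta : nat) (x : 'I_n -> R) : Prop :=
  Q A b x /\ \sum_(j < n) x j = beta%:R.

(* Main.v *)
Require Import Defs.
From HB Require Import structures.
From mathcomp Require Import all_boot all_order all_algebra.
From mathcomp Require Import reals.
From mathcomp Require Import ring lra zify.
Import Order.TTheory GRing.Theory Num.Theory.
Local Open Scope ring_scope.
Set Implicit Arguments. Unset Strict Implicit. Unset Printing Implicit Defensive.

Section Conv.
Variables (R : realType) (n : nat).
Implicit Types (S T : ('I_n -> R) -> Prop).

Lemma conv_pt S p : S p -> conv S p.
Proof.
move=> Sp; exists 1%N, (fun _ => 1), (fun _ => p); split => //.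
split; first by rewrite big_ord1.
by split => // j; rewrite big_ord1 mul1r.
Qed.

Lemma conv_mono S T x : (forall p, S p -> T p) -> conv S x -> conv T x.
Proof.
move=> ST [k [lam [p [H1 [H2 [H3 H4]]]]]].
by exists k, lam, p; split => //; split => //; split => // t; apply: ST.
Qed.

Lemma conv_ext S x y : (forall j, x j = y j) -> conv S x -> conv S y.
Proof.
move=> E [k [lam [p [H1 [H2 [H3 H4]]]]]].
by exists k, lam, p; split => //; split => //; split => // j; rewrite -E.
Qed.

Lemma conv_mix S p q a : 0 <= a <= 1 -> conv S p -> conv S q ->
  conv S (fun j => a * p j + (1 - a) * q j).
Proof.
move=> /andP[a0 a1] [k1 [l1 [p1 [A1 [B1 [C1 D1]]]]]]
  [k2 [l2 [p2 [A2 [B2 [C2 D2]]]]]].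
exists (k1 + k2)%N,
  (fun i => match split i with inl t => a * l1 t | inr t => (1 - a) * l2 t end),
  (fun i => match split i with inl t => p1 t | inr t => p2 t end).
split.
  move=> i; case: (split i) => t.
    by apply: mulr_ge0.
  by apply: mulr_ge0 => //; rewrite subr_ge0.
split.
  rewrite big_split_ord /=.
  under eq_bigr do rewrite (unsplitK (inl _)).
  under [X in _ + X = _]eq_bigr do rewrite (unsplitK (inr _)).
  by rewrite -!mulr_sumr B1 B2 !mulr1 addrC subrK.
split.
  by move=> i; case: (split i).
move=> j; rewrite big_split_ord /=.
under eq_bigr do rewrite (unsplitK (inl _)).
under [X in _ = _ + X]eq_bigr do rewrite (unsplitK (inr _)).
rewrite D1 D2 !mulr_sumr; congr (_ + _); apply: eq_bigr => i _; by rewrite mulrA.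
Qed.

Lemma conv_conv S T x : (forall p, T p -> conv S p) -> conv T x -> conv S x.
Proof.
move=> TS [k]; elim: k x => [|k IH] x [lam [p [A0 [B0 [C0 D0]]]]].
  by move: B0; rewrite big_ord0 => /eqP; rewrite eq_sym oner_eq0.
move: B0; rewrite big_ord_recr /= => B0.
set a := lam ord_max in B0.
have a0 : 0 <= a by exact: A0.
have s0 : 0 <= \sum_(i < k) lam (widen_ord (leqnSn k) i) by apply: sumr_ge0 => i _; exact: A0.
have a1 : a <= 1 by lra.
have [a_eq1 | a_lt1] := eqVneq a 1.
  have z : forall i : 'I_k, lam (widen_ord (leqnSn k) i) = 0.
    move=> i; apply/eqP; rewrite eq_le A0 andbT.
    have : \sum_(i < k) lam (widen_ord (leqnSn k) i) = 0 by lra.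
    move/eqP; rewrite psumr_eq0; last by move=> *; exact: A0.
    by move/allP => /(_ i (mem_index_enum _)) /eqP ->.
  apply: (@conv_ext _ (p ord_max)); last by apply: TS.
    move=> j; rewrite D0 big_ord_recr /= big1 ?add0r.
      by rewrite -/a a_eq1 mul1r.
    by move=> i _; rewrite z mul0r.
have ha : 0 < 1 - a by rewrite subr_gt0 lt_neqAle a_lt1 a1.
pose x' := fun j => \sum_(i < k) (lam (widen_ord (leqnSn k) i) / (1 - a)) *
   p (widen_ord (leqnSn k) i) j.
have cx' : conv S x'.
  apply: IH; exists (fun i => lam (widen_ord (leqnSn k) i) / (1 - a)),
    (fun i => p (widen_ord (leqnSn k) i)).
  split; first by move=> i; apply: divr_ge0 => //; apply: ltW.
  split; last by split.
  rewrite -mulr_suml.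
  have -> : \sum_(i < k) lam (widen_ord (leqnSn k) i) = 1 - a by lra.
  by rewrite divff // gt_eqF.
apply: (@conv_ext _ (fun j => a * p ord_max j + (1 - a) * x' j)).
  move=> j; rewrite D0 big_ord_recr /= addrC; congr (_ + _).
  rewrite /x' mulr_sumr; apply: eq_bigr => i _.
  by rewrite mulrA mulrCA divff ?mulr1 // gt_eqF.
by apply: conv_mix; [rewrite a0 a1 | apply: TS | ].
Qed.

End Conv.

Section Round.
Variables (R : realType) (N : nat).
Implicit Types (y z : 'I_N -> R).

Definition Good y z := is_integral z /\
  forall a b (c : int), c%:~R <= y a - y b -> c%:~R <= z a - z b.

Definition nonint (r : R) : bool := (Num.floor r)%:~R != r.

Lemma frac_bounds (r : R) : 0 <= r - (Num.floor r)%:~R < 1.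
Proof.
have h1 := floor_le r; have h2 := floorD1_gt r.
rewrite intrD in h2; apply/andP; split; lra.
Qed.

Lemma floor_diff (u v : R) (c : int) : c%:~R <= u - v ->
  (c + Num.floor v <= Num.floor u)%R.
Proof.
move=> h; rewrite floor_ge_int intrD; have := floor_le v; lra.
Qed.

Lemma good_floor y : Good y (fun i => (Num.floor (y i))%:~R).
Proof.
split; first by exists (fun i => Num.floor (y i)).
move=> a b c /floor_diff h.
have : ((c + Num.floor (y b))%:~R <= (Num.floor (y a))%:~R :> R) by rewrite ler_int.
rewrite intrD; lra.
Qed.

Lemma good_self y : (forall i, ~~ nonint (y i)) -> Good y y.
Proof.
move=> H; split => //.
exists (fun i => Num.floor (y i)) => j; have := H j; rewrite /nonint negbK.
by move/eqP.
Qed.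

Lemma round_conv k y : (#|[pred i | nonint (y i)]| <= k)%N -> conv (Good y) y.
Proof.
elim: k y => [|k IH] y hk.
  apply: conv_pt; apply: good_self => i; apply/negP => hi.
  by move: hk; rewrite leqn0 => /eqP/card0_eq/(_ i); rewrite inE hi.
case: (pickP [pred i | nonint (y i)]) => [i0 hi0 | h0]; last first.
  by apply: conv_pt; apply: good_self => i; have := h0 i; rewrite /= => ->.
pose F i := (Num.floor (y i))%:~R : R.
pose f i := y i - F i.
have fb i : 0 <= f i < 1 by apply: frac_bounds.
case: (@arg_maxP _ _ _ i0 xpredT f isT) => ist _ fmax.
set g := f ist.
have fle j : f j <= g by apply: fmax.
have g0 : 0 < g.
  have /andP[a _] := fb i0.
  have h2 : f i0 != 0 by rewrite /f subr_eq0 eq_sym.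
  apply: (lt_le_trans _ (fle i0)).
  by rewrite lt_neqAle eq_sym h2 a.
pose w i := F i + f i / g.
have yw j : y j = g * w j + (1 - g) * F j.
  rewrite /w mulrDr mulrCA divff ?gt_eqF // mulr1 /f; ring.
have gw : forall z, Good w z -> Good y z.
  move=> z [zi zc]; split => // a b c h; apply: zc.
  have hm := floor_diff h.
  set m := (Num.floor (y a) - Num.floor (y b) - c)%R.
  have m0 : (0 <= m)%R by rewrite /m; lia.
  have hM : (m%:~R : R) = F a - F b - c%:~R by rewrite /m !intrD !intrN.
  have /andP[fa0 fa1] := fb a; have /andP[fb0 fb1] := fb b.
  have hv : f b / g <= 1 by rewrite ler_pdivrMr // mul1r.
  have hu : 0 <= f a / g by apply: divr_ge0 => //; apply: ltW.
  have ey : y a - y b - c%:~R = m%:~R + f a - f b by rewrite hM /f; ring.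
  have ew : w a - w b - c%:~R = m%:~R + f a / g - f b / g by rewrite hM /w; ring.
  have : (m == 0) || (1 <= m)%R by lia.
  case/orP => [/eqP m00 | m1].
    move: ey ew; rewrite m00 /= add0r => ey ew.
    have : f b <= f a by lra.
    move=> hab; have : f b / g <= f a / g.
      by apply: ler_wpM2r => //; rewrite invr_ge0 ltW.
    lra.
  have : (1 : R) <= m%:~R by rewrite ler1z.
  lra.
have cw : (#|[pred i | nonint (w i)]| < #|[pred i | nonint (y i)]|)%N.
  rewrite [X in (_ < X)%N](cardD1 ist).
  have his : nonint (y ist).
    rewrite /nonint; apply/negP => /eqP hy.
    have : f ist = 0 by rewrite /f /F hy subrr.
    by move=> h; move: g0; rewrite /g h ltxx.
  rewrite inE /= his add1n ltnS; apply: subset_leq_card; apply/subsetP => i.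
  rewrite !inE /= => hi; apply/andP; split.
    apply/eqP => eis; move: hi; rewrite eis /nonint.
    have -> : w ist = (Num.floor (y ist) + 1)%:~R.
      by rewrite /w -/g divff ?gt_eqF // intrD.
    by rewrite intrKfloor eqxx.
  apply: contraLR hi; rewrite /nonint !negbK => /eqP hy.
  by rewrite /w /f -hy /F subrr mul0r addr0 intrKfloor.
have cw' : (#|[pred i | nonint (w i)]| <= k)%N.
  by rewrite -ltnS; apply: leq_trans cw hk.
apply: (conv_ext (x := fun j => g * w j + (1 - g) * F j)).
  by move=> j; rewrite yw.
have hg1 : g <= 1 by have /andP[_ /ltW] := fb ist.
have hg : 0 <= g <= 1 by rewrite hg1 ltW.
have c1 : conv (Good y) w by apply: conv_mono (IH _ cw') => p; apply: gw.
have c2 : conv (Good y) F by apply: conv_pt; apply: good_floor.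
exact: (conv_mix hg c1 c2).
Qed.

End Round.

Section Main.
Variables (R : realType) (n : nat).

Lemma natrz (k : nat) : ((k%:Z)%:~R : R) = k%:R.
Proof. by []. Qed.

Lemma row_sum (f : nat -> R) (l k : nat) : (l < n)%N -> (k < n)%N ->
  \sum_(0 <= t < n) (if ((t + n - l) %% n < k)%N then 1 else 0) * (f t.+1 - f t)
  = if (l + k <= n)%N then f (l + k)%N - f l
    else (f n - f l) + (f (l + k - n)%N - f 0%N).
Proof.
move=> ln kn.
have mA t : (l <= t)%N -> (t < l + n)%N -> ((t + n - l) %% n = t - l)%N.
  move=> h1 h2; have -> : (t + n - l = (t - l) + n)%N by lia.
  by rewrite modnDr modn_small //; lia.
have mB t : (t < l)%N -> ((t + n - l) %% n = t + n - l)%N.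
  by move=> h; rewrite modn_small //; lia.
pose G t := (if ((t + n - l) %% n < k)%N then 1 else 0) * (f t.+1 - f t) : R.
change (\sum_(0 <= t < n) G t = if (l + k <= n)%N then f (l + k)%N - f l
    else (f n - f l) + (f (l + k - n)%N - f 0%N)).
have zero a c : (forall t, (a <= t < c)%N -> ((t + n - l) %% n < k)%N = false) ->
   \sum_(a <= t < c) G t = 0.
  move=> H; rewrite (eq_big_nat _ _ (F2 := fun=> 0)) ?big1_eq //.
  by move=> t ht; rewrite /G H // mul0r.
have tele a c : (a <= c)%N -> (forall t, (a <= t < c)%N -> ((t + n - l) %% n < k)%N = true) ->
   \sum_(a <= t < c) G t = f c - f a.
  move=> ac H; apply: telescope_sumr_eq => // t ht.
  by rewrite /G H // mul1r.
case: ifP => hlk.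
  rewrite (big_cat_nat (n := l)) //=; last by lia.
  rewrite (big_cat_nat (n := (l + k)%N) (m := l)) //=; last by lia.
  rewrite zero ?add0r; last by move=> t ht; rewrite mB; lia.
  rewrite tele; last by move=> t ht; rewrite mA; lia.
    rewrite zero ?addr0 //; move=> t ht; rewrite mA; lia.
  by lia.
rewrite (big_cat_nat (n := (l + k - n)%N)) //=; last by lia.
rewrite (big_cat_nat (n := l) (m := (l + k - n)%N)) //=; last by lia.
rewrite tele; last by move=> t ht; rewrite mB; lia.
  rewrite zero ?add0r; last by move=> t ht; rewrite mB; lia.
  rewrite tele; last by move=> t ht; rewrite mA; lia.
    by rewrite addrC.
  by lia.
by lia.
all: lia.
Qed.

Definition D (z : 'I_n.+1 -> R) : 'I_n -> R :=
  fun j => z (inord j.+1) - z (inord j).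

Lemma conv_D (S : ('I_n.+1 -> R) -> Prop) (T : ('I_n -> R) -> Prop) y :
  (forall z, S z -> T (D z)) -> conv S y -> conv T (D y).
Proof.
move=> ST [k [lam [p [H1 [H2 [H3 H4]]]]]].
exists k, lam, (fun t => D (p t)); split => //; split => //; split.
  by move=> t; apply: ST.
move=> j; rewrite /D !H4 -sumrB; apply: eq_bigr => t _; by rewrite mulrBr.
Qed.

Lemma rowD (z : 'I_n.+1 -> R) (l : 'I_n) k : (k < n)%N ->
  \sum_(j < n) (if @in_circ_interval n l k j then 1 else 0) * D z j =
  if (l + k <= n)%N then z (inord (l + k)%N) - z (inord l)
  else (z (inord n) - z (inord l)) + (z (inord (l + k - n)%N)  - z (inord 0)).
Proof.
move=> kn.
rewrite -(row_sum (fun t => z (inord t))) ?ltn_ord //.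
by rewrite big_mkord.
Qed.

Lemma Qbeta_Qstar m (A : 'M[R]_(m, n)) (b : 'I_m -> nat) beta x :
  circular A -> Qbeta A b beta x -> Qstar A b x.
Proof.
move=> circA [[Qx Px] Sx].
pose y : 'I_n.+1 -> R := fun j => \sum_(i < n | (i < j)%N) x i.
have Y1 t : (t <= n)%N -> y (inord t) = \sum_(i < n | (i < t)%N) x i.
  by move=> h; rewrite /y inordK.
have Y2 j : D y j = x j.
  rewrite /D Y1 // Y1; last by apply: ltnW.
  rewrite (bigD1 j) //=.
  have -> : \sum_(i < n | (i < j.+1)%N && (i != j)) x i = \sum_(i < n | (i < j)%N) x i.
    apply: eq_bigl => i; rewrite ltnS -val_eqE /=.
    by case: ltngtP.
  by rewrite addrK.
have Yb : y (inord n) - y (inord 0) = beta%:R.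
  rewrite !Y1 // [X in _ - X]big1 ?subr0; last by move=> i; rewrite ltn0.
  rewrite -Sx; apply: eq_bigl => i; exact: ltn_ord.
have cy := round_conv (leqnn #|[pred i | nonint (y i)]|).
apply: (conv_ext (x := D y)); first exact: Y2.
apply: (conv_D _ cy) => z [[zz hz] zc].
split; last first.
  by exists (fun j => zz (inord j.+1) - zz (inord j)) => j; rewrite /D !hz intrB.
have zb : z (inord n) - z (inord 0) = beta%:R.
  have h1 := zc (inord n) (inord 0) beta%:Z; rewrite natrz Yb lexx in h1.
  have h2 := zc (inord 0) (inord n) (- beta%:Z); rewrite intrN natrz in h2.
  have h3 : - (beta%:R : R) <= y (inord 0) - y (inord n) by lra.
  have := h1 isT; have := h2 h3; lra.
split.
  move=> i; have [l [k [k2 [kn hA]]]] := circA i.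
  have kn' : (k < n)%N by lia.
  have E : forall w, \sum_(j < n) A i j * D w j =
     \sum_(j < n) (if @in_circ_interval n l k j then 1 else 0) * D w j.
    by move=> w; apply: eq_bigr => j _; rewrite hA.
  have hy : (b i)%:R <= \sum_(j < n) A i j * D y j.
    by under eq_bigr do rewrite Y2; exact: Qx i.
  rewrite E rowD // in hy; rewrite E rowD //.
  case: ifP hy => _ hy.
    have := zc (inord (l + k)%N) (inord l) (b i)%:Z; rewrite natrz; apply; exact: hy.
  have hc : (((b i)%:Z - beta%:Z)%:~R : R) <=
     y (inord (l + k - n)%N) - y (inord l).
    rewrite intrB !natrz; lra.
  have := zc _ _ _ hc; rewrite intrB !natrz; lra.
move=> j; have := zc (inord j.+1) (inord j) 0; rewrite /D.
by apply; rewrite -/(D y j) Y2; apply: Px.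
Qed.

End Main.

Unset Implicit Arguments.
Set Strict Implicit.
Theorem corollary3p2 (R : realType) (m n : nat) (A : 'M[R]_(m, n))
  (b : 'I_m -> nat) :
  circular A ->
  forall x : 'I_n -> R,
    Qstar A b x <-> conv (fun y => exists beta : nat, Qbeta A b beta y) x.
Proof.
move=> circA x; split.
  apply: conv_mono => p [Qp [zz hz]].
  exists (\sum_(j < n) `|zz j|%N); split => //.
  rewrite natr_sum; apply: eq_bigr => j _.
  have h0 : (0 <= zz j)%R by rewrite -(ler0z R) -hz; exact: Qp.2 j.
  by rewrite hz -natrz gez0_abs.
apply: conv_conv => p [beta hb].
exact: Qbeta_Qstar circA hb.
Qed.
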